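(* Any Radon measure $\mu$ of finite mass on a Noetherian Priestley space $(X,\tau,\le)$ is atomic: there is a countable set $F\subset X$ such that $\mu=\sum_{x\in F}\mu(\{x\})\delta_x$ with $\sum_{x\in F}\mu(\{x\})<\infty$.
   Context: A Priestley space is a partially ordered set $(X,\le)$ with a quasi-compact topology $\tau$ such that whenever $y\not\le x$ there is a clopen down-set $U$ (i.e. $z\in U$, $w\le z$ implies $w\in U$) with $x\in U$, $y\notin U$; it is compact Hausdorff. It is Noetherian if the topology $\tau^u$ consisting of all open up-sets is a Noetherian topology, equivalently every decreasing sequence of closed down-sets is eventually stationary. A Radon measure is a positive Borel measure that is inner regular with respect to compact sets. *)

(* Defs.v *)
From HB Require Import structures.
From mathcomp Require Import all_boot all_order all_algebra.
From mathcomp Require Import all_classical all_reals all_analysis.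
Set Implicit Arguments. Unset Strict Implicit. Unset Printing Implicit Defensive.
Import Order.TTheory GRing.Theory Num.Theory.
Local Open Scope classical_set_scope.
Local Open Scope ring_scope.

Definition partial_order {X : Type} (le : X -> X -> Prop) :=
  [/\ (forall x, le x x),
      (forall x y, le x y -> le y x -> x = y) &
      (forall x y z, le x y -> le y z -> le x z)].

Definition down_set {X : Type} (le : X -> X -> Prop) (U : set X) :=
  forall z w, U z -> le w z -> U w.

Definition up_set {X : Type} (le : X -> X -> Prop) (U : set X) :=
  forall z w, U z -> le z w -> U w.

Definition priestley_space (X : topologicalType) (le : X -> X -> Prop) :=
  [/\ partial_order le,
      compact [set: X] &
      forall x y : X, ~ le y x ->
        exists U : set X, [/\ clopen U, down_set le U, U x & ~ U y]].

(* The topology tau^u consists of the open up-sets; it is Noetherian iff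
   every increasing sequence of its open sets is eventually stationary. *)
Definition noetherian_priestley (X : topologicalType) (le : X -> X -> Prop) :=
  forall U : nat -> set X,
    (forall n, open (U n) /\ up_set le (U n)) ->
    (forall n, U n `<=` U n.+1) ->
    exists N : nat, forall n, (N <= n)%N -> U n = U N.

Definition borel (X : ptopologicalType) := g_sigma_algebraType (@open X).

Definition radon_measure (X : ptopologicalType) (R : realType)
    (mu : {measure set (borel X) -> \bar R}) :=
  forall A : set (borel X), measurable A ->
    mu A = ereal_sup [set mu K | K in
      [set K : set (borel X) | [/\ measurable K, @compact X K & K `<=` A]]].

(* Main.v *)
Require Import Defs.
From HB Require Import structures.
From mathcomp Require Import all_boot all_order all_algebra.
From mathcomp Require Import all_classical all_reals all_analysis.
From mathcomp Require Import finmap.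
Import Order.TTheory GRing.Theory Num.Theory.
Local Open Scope classical_set_scope.
Local Open Scope ring_scope.
Lemma acc_max (X : topologicalType) (le : X -> X -> Prop) (P : set (set X)) :
  noetherian_priestley le -> (forall V, P V -> open V /\ up_set le V) ->
  P !=set0 -> exists2 M, P M & forall W, P W -> M `<=` W -> W = M.
Proof.
move=> noe PV [M0 PM0].
case: (pselect (exists2 M, P M & forall W, P W -> M `<=` W -> W = M)) => // H.
have H' : forall M, exists W, P M -> [/\ P W, M `<=` W & W <> M].
  move=> M; have [PM|nPM] := pselect (P M); last by exists M.
  case: (pselect (exists W, [/\ P W, M `<=` W & W <> M])) => [[W HW]|N].
    by exists W.
  exfalso; apply: H; exists M => // W PW MW.
  by apply: contrapT => WM; apply: N; exists W.
have [f Hf] := choice H'.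
pose U n := iter n f M0.
have PU n : P (U n) by elim: n => [|n IH] //=; have [] := Hf _ IH.
have [N HN] := noe U (fun n => PV _ (PU n)) (fun n => let: And3 _ h _ := Hf _ (PU n) in h).
have := HN N.+1 (leqnSn N); have [_ _] := Hf _ (PU N); done.
Qed.

Lemma open_up_closed (X : ptopologicalType) (le : X -> X -> Prop) (V : set X) :
  priestley_space le -> noetherian_priestley le -> open V -> up_set le V -> closed V.
Proof.
move=> [[lerefl leanti letrans] cX sep] noe oV uV.
pose P := [set W : set X | [/\ open W, closed W, up_set le W & W `<=` V]].
have P0 : P set0 by split => //; [exact: open0|exact: closed0].
have [M [oM cM uM MV] Mmax] := @acc_max X le P noe
  (fun W PW => let: And4 a _ c _ := PW in conj a c) (ex_intro _ set0 P0).
suff VM : V `<=` M by rewrite (_ : V = M)//; apply/seteqP; split.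
move=> x Vx.
have cV : compact (~` V).
  by apply: (subclosed_compact _ cX) => //; rewrite closedC.
move: cV; rewrite compact_cover => cV.
have := cV (set X) [set U : set X | [/\ clopen U, down_set le U & ~ U x]] id.
case.
- by move=> U [[oU _] _ _].
- move=> z /= nVz.
  have nlxz : ~ le x z by move=> lxz; apply: nVz; exact: uV lxz.
  have [U [clU dU Uz nUx]] := sep z x nlxz.
  by exists U.
move=> D' D'D0 cover'.
have D'D : forall U : set X, [set` D'] U -> [/\ clopen U, down_set le U & ~ U x].
  by move=> U /= h; apply: set_mem; apply: D'D0.
pose W := ~` (\bigcup_(U in [set` D']) U).
have oW : open W.
  rewrite openC bigcup_fset; apply: closed_bigsetU => U /D'D [[_ ?] _ _]//.
have cW : closed W.
  rewrite /W closedC; apply: bigcup_open => U /D'D [[? _] _ _]//.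
have uW : up_set le W.
  move=> z w Wz lzw [U /= D'U Uw]; apply: Wz; exists U => //.
  by have [_ dU _] := D'D _ D'U; exact: dU lzw.
have xW : W x by move=> [U /= /D'D [_ _ nUx] Ux].
have WV : W `<=` V.
  move=> z Wz; apply/not_notP => nVz; apply: Wz.
  have := cover' z nVz; move=> [U /= D'U Uz]; by exists U.
have PMW : P (M `|` W).
  split.
  - exact: openU.
  - exact: closedU.
  - move=> z w [Mz|Wz] lzw; [left; exact: uM lzw|right; exact: uW lzw].
  - by move=> z [/MV|/WV].
have := Mmax _ PMW (@subsetUl _ M W) => <-; by right.
Qed.

Lemma isolated_point (X : ptopologicalType) (le : X -> X -> Prop) (S : set X) :
  priestley_space le -> noetherian_priestley le -> S !=set0 ->
  exists x, [/\ S x & exists O, [/\ open O, O x & forall y, O y -> S y -> y = x]].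
Proof.
move=> pX noe [s Ss]; have [[lerefl leanti letrans] cX sep] := pX.
pose P := [set V : set X | [/\ open V, up_set le V & exists2 y, S y & ~ V y]].
have P0 : P set0 by split => //; [exact: open0| by exists s].
have [M [oM uM [x Sx nMx]] Mmax] := @acc_max X le P noe
  (fun W PW => let: And3 a c _ := PW in conj a c) (ex_intro _ set0 P0).
have cM : closed M := @open_up_closed X le M pX noe oM uM.
have key : forall y, S y -> ~ M y -> forall w, ~ M w -> le w y.
  move=> y Sy nMy.
  pose Vy := [set w | ~ le w y].
  have oVy : open Vy.
    have -> : Vy = \bigcup_(U in [set U : set X | [/\ clopen U, down_set le U & U y]]) ~` U.
      apply/seteqP; split => w /=.
        move=> nlwy; have [U [clU dU Uy nUw]] := sep y w nlwy.
        by exists U.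
      move=> [U [_ dU Uy] nUw] lwy; apply: nUw; exact: dU lwy.
    by apply: bigcup_open => U [[_ cU] _ _]; rewrite openC.
  have PMV : P (M `|` Vy).
    split.
    - exact: openU.
    - move=> z w [Mz|Vz] lzw; first by left; exact: uM lzw.
      by right => lwy; apply: Vz; exact: letrans lzw lwy.
    - by exists y => //; move=> [/nMy//|/=]; apply; exact: lerefl.
  have := Mmax _ PMV (@subsetUl _ M Vy) => EM w nMw.
  apply: contrapT => nlwy; apply: nMw; rewrite -EM; by right.
exists x; split => //; exists (~` M); split => //.
  by rewrite openC.
move=> y nMy Sy; apply: leanti; [exact: key x Sx nMx y nMy|exact: key y Sy nMy x nMx].
Qed.

Lemma singleton_closed (X : ptopologicalType) (le : X -> X -> Prop) (x : X) :
  priestley_space le -> closed [set x].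
Proof.
move=> [[lerefl leanti letrans] cX sep].
rewrite -openC.
have -> : ~` [set x] = \bigcup_(G in [set G : set X | open G /\ ~ G x]) G.
  apply/seteqP; split => y /=.
    move=> nyx.
    case: (pselect (le y x)) => lyx.
      have nlxy : ~ le x y by move=> lxy; apply: nyx; exact: leanti.
      have [U [[oU _] dU Uy nUx]] := sep y x nlxy.
      by exists U.
    have [U [[_ cU] dU Ux nUy]] := sep x y lyx.
    by exists (~` U) => //; split => //; rewrite openC.
  by move=> [G [_ nGx] Gy] yx; apply: nGx; rewrite -yx.
by apply: bigcup_open => G [].
Qed.
Lemma open_meas (X : ptopologicalType) (A : set (borel X)) : @open X A -> measurable A.
Proof. by move=> oA; apply: sub_sigma_algebra. Qed.

Lemma diffuse_null (R : realType) (X : ptopologicalType) (le : X -> X -> Prop)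
  (mu : {measure set (borel X) -> \bar R}) :
  priestley_space le -> noetherian_priestley le -> radon_measure mu ->
  forall B : set (borel X), measurable B -> (forall x, B x -> mu [set x] = 0%E) ->
  mu B = 0%E.
Proof.
move=> pX noe rad B mB B0.
pose GG := [set G : set X | open G /\ mu (G `&` B) = 0%E].
pose O : set X := \bigcup_(G in GG) G.
have oO : open O by apply: bigcup_open => G [].
have mO : measurable (O : set (borel X)) by exact: open_meas.
have OB0 : mu (O `&` B) = 0%E.
  have mOB : measurable (O `&` B : set (borel X)) by exact: measurableI.
  suff h : (mu (O `&` B) <= 0)%E by apply/eqP; rewrite -measure_le0.
  rewrite (rad _ mOB).
  apply: ge_ereal_sup => _ [K [mK cK KOB] <-].
  move: cK; rewrite compact_cover => cK.
  have [D' D'D0 cov] := cK (set X) GG id (fun G h => proj1 h)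
     (fun z Kz => let: conj Oz _ := KOB z Kz in Oz).
  have D'D : forall G : set X, [set` D'] G -> GG G.
    by move=> G /= h; apply: set_mem; apply: D'D0.
  apply: (@le_trans _ _ (\sum_(G \in [set` D']) mu (G `&` B))%E).
    apply: content_sub_fsum => //.
    - by move=> G /D'D [oG _]; apply: measurableI => //; exact: open_meas.
    - move=> z Kz; have [G /= D'G Gz] := cov z Kz.
      by exists G => //; split => //; have [] := KOB z Kz.
  by rewrite fsbig1// => G /D'D [].
case: (pselect ((B `\` O) !=set0)) => [SN|S0]; last first.
  have BO : B `<=` O.
    by move=> z Bz; apply: contrapT => nOz; apply: S0; exists z.
  by rewrite -OB0 setIidr.
have [x [[Bx nOx] [P1 [oP1 P1x uniq]]]] := @isolated_point X le _ pX noe SN.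
have mS : measurable (B `\` O : set (borel X)) by exact: measurableD.
have mP1 : measurable (P1 : set (borel X)) by exact: open_meas.
have S1 : P1 `&` (B `\` O) = [set x].
  apply/seteqP; split => z /=; first by move=> [P1z Sz]; exact: uniq.
  by move=> ->.
have D0 : mu (P1 `&` B) = 0%E.
  have sub : P1 `&` B `<=` (O `&` B) `|` (P1 `&` (B `\` O)).
    move=> z [P1z Bz]; case: (pselect (O z)) => Oz; first by left.
    by right.
  have mU : measurable ((O `&` B) `|` (P1 `&` (B `\` O)) : set (borel X)).
    by apply: measurableU; apply: measurableI.
  have h1 : (mu (P1 `&` B) <= mu ((O `&` B) `|` (P1 `&` (B `\` O))))%E.
    by apply: le_measure => //; apply/mem_set => //; apply: measurableI.
  have h2 : (mu ((O `&` B) `|` (P1 `&` (B `\` O))) <= mu (O `&` B) + mu (P1 `&` (B `\` O)))%E.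
    by apply: measureU2; apply: measurableI.
  have mx : mu (P1 `&` (B `\` O)) = 0%E by rewrite S1 B0.
  rewrite OB0 mx adde0 in h2.
  suff h : (mu (P1 `&` B) <= 0)%E by apply/eqP; rewrite -measure_le0.
  exact: le_trans h1 h2.
exfalso; apply: nOx; exists P1 => //.
Qed.
Section count.
Context d (T : measurableType d) (R : realType).

Lemma triv_set1 (D : set T) : trivIset D (fun x => [set x]).
Proof. by move=> i j _ _ [z [/= -> ->]]. Qed.

Lemma atoms_countable (mu : {measure set T -> \bar R}) :
  (forall x : T, measurable [set x]) -> (mu setT < +oo)%E ->
  countable [set x | (0 < mu [set x])%E].
Proof.
move=> m1 fin.
have [r Er] : exists r, mu setT = r%:E.
  by exists (fine (mu setT)); rewrite fineK// ge0_fin_numE.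
have -> : [set x | (0 < mu [set x])%E] =
    \bigcup_(n in [set: nat]) [set x | (((n.+1%:R)^-1)%:E < mu [set x])%E].
  apply/seteqP; split => x /=.
    move=> mx0.
    have fx : (mu [set x] < +oo)%E.
      by apply: le_lt_trans fin; apply: le_measure; [exact/mem_set/m1|exact/mem_set|by []].
    have [s Es] : exists s, mu [set x] = s%:E.
      by exists (fine (mu [set x])); rewrite fineK// ge0_fin_numE.
    move: mx0; rewrite Es lte_fin => s0.
    exists (Num.truncn s^-1) => //=; rewrite Es lte_fin.
    rewrite invf_plt ?posrE//.
    exact: truncnS_gt.
  move=> [n _ /=]; apply: le_lt_trans; rewrite lee_fin invr_ge0//.
apply: bigcup_countable => [|n _]; first exact: countableP.
apply: finite_set_countable; apply: contrapT => inf.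
pose c : R := (n.+1%:R)^-1.
have c0 : 0 < c by rewrite invr_gt0 ltr0n.
have [B BF kB] := infinite_set_fset (Num.truncn (r * n.+1%:R)).+1 inf.
have : (mu (\big[setU/set0]_(i <- B) [set i]) <= mu setT)%E.
  apply: le_measure; [apply/mem_set/bigsetU_measurable => i _; exact: m1|exact/mem_set|by []].
rewrite measure_fbigsetU//; last exact: triv_set1.
have : (\sum_(i <- B) (c%:E) <= \sum_(i <- B) mu [set i])%E.
  rewrite big_seq [leRHS]big_seq; apply: lee_sum => i iB.
  by apply: ltW; apply: BF.
move=> /le_trans h /h; rewrite Er sumEFin lee_fin.
rewrite -[c]mulr1 -mulr_sumr.
have -> : \sum_(i <- B) (1:R) = #|`B|%:R by rewrite card_fset_sum1 natr_sum.
move=> h2.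
have : (Num.truncn (r * n.+1%:R)).+1%:R * c <= r.
  apply: le_trans h2; rewrite [leLHS]mulrC; apply: ler_wpM2l; [exact: ltW|by rewrite ler_nat].
rewrite -ler_pdivlMr// /c invrK => /(lt_le_trans (truncnS_gt _)).
by rewrite ltxx.
Qed.

Lemma esum_le_measure (mu : {measure set T -> \bar R}) (S M : set T) :
  (forall x : T, measurable [set x]) -> measurable M -> S `<=` M ->
  (\esum_(x in S) mu [set x] <= mu M)%E.
Proof.
move=> m1 mM SM; apply: ge_ereal_sup => _ [G [finG GS] <-].
rewrite -measure_fin_bigcup//; last exact: triv_set1.
apply: le_measure.
- by apply/mem_set/fin_bigcup_measurable => // i _; exact: m1.
- exact/mem_set.
- by move=> z [x Gx /= ->]; apply/SM/GS.
Qed.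

Lemma measure_countable (mu : {measure set T -> \bar R}) (S : set T) :
  (forall x : T, measurable [set x]) -> countable S ->
  mu S = (\esum_(x in S) mu [set x])%E.
Proof.
move=> m1 cS; apply/eqP; rewrite eq_le; apply/andP; split; last first.
  by apply: esum_le_measure => //; exact: countable_measurable.
have [->|/set0P[s Ss]] := eqVneq S set0; first by rewrite measure0; apply: esum_ge0.
have /countable_injP[f injf] := cS.
pose g := 'pinv_(cst s) S f.
have gf : forall x, S x -> g (f x) = x.
  by move=> x Sx; rewrite /g pinvKV//; exact/mem_set.
have ESg : S = \bigcup_(n in f @` S) [set g n].
  apply/seteqP; split => x.
    by move=> Sx; exists (f x); [exists x|rewrite /= gf].
  by move=> [_ [y Sy <-] /= ->]; rewrite gf.
rewrite [in leLHS]ESg measure_bigcup//; last first.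
  move=> i j [x Sx <-] [y Sy <-] [z [/= ]]; rewrite !gf// => -> ->//.
rewrite nneseries_esum//.
rewrite (_ : [set x | x \in f @` S] = f @` S); last by apply/seteqP; split => x /=; [move/set_mem|move/mem_set].
rewrite esum_image; last by move=> x y /= Sx Sy fxy; apply: injf => //; exact/mem_set.
by rewrite le_eqVlt; apply/orP; left; apply/eqP; apply: eq_esum => x Sx; rewrite gf.
Qed.

End count.
Theorem theorem3p8 (R : realType) (X : ptopologicalType) (le : X -> X -> Prop)
  (mu : {measure set (borel X) -> \bar R}) :
  priestley_space le -> noetherian_priestley le ->
  radon_measure mu -> (mu [set: borel X] < +oo)%E ->
  exists F : set (borel X),
    [/\ countable F,
        (\esum_(x in F) mu [set x] < +oo)%E &
        forall A : set (borel X), measurable A ->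
          mu A = \esum_(x in F) (mu [set x] * \d_x A)%E].
Proof.
move=> pX noe rad fin.
have m1 : forall x : borel X, measurable [set x].
  move=> x; rewrite -[[set x]]setCK; apply: measurableC; apply: open_meas.
  by rewrite openC; exact: singleton_closed pX.
pose F := [set x : borel X | (0 < mu [set x])%E].
have Fc : countable F by exact: atoms_countable.
have mF : measurable F by exact: countable_measurable.
exists F; split => //.
  by apply: le_lt_trans fin; apply: esum_le_measure.
move=> A mA.
rewrite (eq_esum (b := fun x => if x \in A then mu [set x] else 0%E)); last first.
  by move=> x _; rewrite diracE; case: (x \in A); rewrite ?mule1 ?mule0.
rewrite -esum_mkcondr -measure_countable//; last first.
  exact: (sub_countable (subset_card_le (@subIsetl _ F A)) Fc).
have h : mu A = (mu (A `\` F) + mu (A `&` F))%E := measureDI mu mA mF.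
have n0 : mu (A `\` F) = 0%E.
  apply: (@diffuse_null R X le mu pX noe rad (A `\` F)).
    exact: measurableD.
move=> x [_ nFx]; apply/eqP; rewrite -measure_le0 leNgt; apply/negP => hx.
exact: nFx.
by rewrite h n0 add0e setIC.
Qed.
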